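(* Let $f:\mathbb{R}^p\to\mathbb{R}$ be twice differentiable, let $k^*$ be a positive integer and $\vec w^*=\arg\min_{\vec w:\ \|\vec w\|_0^{\mathcal{G}}\le k^*}f(\vec w)$. Let $k'=2k+k^*$, where $k=O\!\left(\left(\frac{L_{k'}}{\alpha_{k'}}\right)^2k^*\right)$, and suppose $f$ satisfies RSC/RSS of order $k'$ with constants $\alpha_{k'},L_{k'}$. Run the IHT algorithm with step size $\eta=1/L_{k'}$ and with the exact projection $P_k^{\mathcal{G}}$. Then for $\epsilon>0$, the iterate $\vec w_T$ with $T=O\!\left(\frac{L_{k'}}{\alpha_{k'}}\cdot\frac{\|\vec w^*\|_2}{\epsilon}\right)$ satisfies \[ \|\vec w_T-\vec w^*\|_2\le\epsilon+\frac{10L_{k'}}{\alpha_{k'}}\gamma,\qquad \gamma=\frac{2}{L_{k'}}\max_{S:\ |\operatorname{G-supp}(S)|\le k}\|(\nabla f(\vec w^* ))_S\|_2. \]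
   Context: Groups $\mathcal{G}=\{G_1,\dots,G_M\}$, $G_i\subseteq[p]$, $\bigcup_iG_i=[p]$. For $S\subseteq[p]$, $\vec v_S$ agrees with $\vec v$ on $S$ and is $0$ elsewhere. $\|\vec w\|_0^{\mathcal{G}}$ is the minimum number of nonzero terms in a decomposition $\vec w=\sum_i\vec a_{G_i}$ with $\operatorname{supp}(\vec a_{G_i})\subseteq G_i$ (the minimum number of groups covering $\operatorname{supp}(\vec w)$); $|\operatorname{G-supp}(S)|$ is the minimum number of groups whose union covers $S$. RSC/RSS of order $k$ with constants $\alpha_k,L_k$: $\alpha_kI\preceq\nabla^2f(\vec w)\preceq L_kI$ for all $\vec w$ with $\|\vec w\|_0^{\mathcal{G}}\le k$. Exact projection: $P_k^{\mathcal{G}}(\vec g)=\arg\min_{\vec w}\|\vec w-\vec g\|_2^2$ subject to $\|\vec w\|_0^{\mathcal{G}}\le k$. IHT algorithm: start from a $k$-group sparse $\vec w_0$ and iterate $\vec w_{t+1}=P_k^{\mathcal{G}}(\vec w_t-\eta\nabla f(\vec w_t))$. *)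

(* Defs.v *)
From HB Require Import structures.
From mathcomp Require Import all_boot all_order all_algebra.
From mathcomp Require Import all_classical all_reals all_analysis.
Set Implicit Arguments. Unset Strict Implicit. Unset Printing Implicit Defensive.
Import Order.TTheory GRing.Theory Num.Theory.
Import numFieldNormedType.Exports.
Local Open Scope ring_scope.

Section Defs.
Variable R : realType.
Variables (p M : nat).

Definition norm2 (v : 'rV[R]_p) : R := Num.sqrt (\sum_(i < p) v ord0 i ^+ 2).

Definition vsupp (v : 'rV[R]_p) : {set 'I_p} := [set i | v ord0 i != 0].

Definition restrict (v : 'rV[R]_p) (S : {set 'I_p}) : 'rV[R]_p :=
  \row_i (if i \in S then v ord0 i else 0).

(* |G-supp(S)| : minimum number of groups whose union covers S
   (the default value M is attained by the full family since groups cover [p]) *)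
Definition Gsupp_card (G : 'I_M -> {set 'I_p}) (S : {set 'I_p}) : nat :=
  \big[minn/M]_(I : {set 'I_M} | S \subset \bigcup_(i in I) G i) #|I|.

Definition gnorm0 (G : 'I_M -> {set 'I_p}) (w : 'rV[R]_p) : nat :=
  Gsupp_card G (vsupp w).

Definition groups_cover (G : 'I_M -> {set 'I_p}) : Prop :=
  \bigcup_(i < M) G i = [set: 'I_p].

Definition grad (f : 'rV[R]_p -> R) (w : 'rV[R]_p) : 'rV[R]_p :=
  \row_i ('D_(delta_mx ord0 i) f w).

Definition twice_differentiable (f : 'rV[R]_p -> R) : Prop :=
  (forall x, differentiable f x) /\
  (forall (v x : 'rV[R]_p), differentiable ('D_v f) x).

(* v^T (Hessian of f at w) v, the second directional derivative *)
Definition hess_quad (f : 'rV[R]_p -> R) (w v : 'rV[R]_p) : R :=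
  'D_v ('D_v f) w.

Definition RSC_RSS (G : 'I_M -> {set 'I_p}) (f : 'rV[R]_p -> R) (k : nat)
  (alpha L : R) : Prop :=
  forall w : 'rV[R]_p, (gnorm0 G w <= k)%N ->
    forall v : 'rV[R]_p,
      alpha * norm2 v ^+ 2 <= hess_quad f w v /\ hess_quad f w v <= L * norm2 v ^+ 2.

Definition is_proj (G : 'I_M -> {set 'I_p}) (k : nat) (g y : 'rV[R]_p) : Prop :=
  (gnorm0 G y <= k)%N /\
  forall x : 'rV[R]_p, (gnorm0 G x <= k)%N -> norm2 (y - g) <= norm2 (x - g).

Definition IHT_run (G : 'I_M -> {set 'I_p}) (f : 'rV[R]_p -> R) (k : nat)
  (eta : R) (w : nat -> 'rV[R]_p) : Prop :=
  forall t, is_proj G k (w t - eta *: grad f (w t)) (w t.+1).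

Definition max_restr (G : 'I_M -> {set 'I_p}) (k : nat) (v : 'rV[R]_p) : R :=
  \big[Num.max/0]_(S : {set 'I_p} | (Gsupp_card G S <= k)%N) norm2 (restrict v S).

End Defs.

(* Main.v *)
Require Import Defs.
From HB Require Import structures.
From mathcomp Require Import all_boot all_order all_algebra.
From mathcomp Require Import all_classical all_reals all_analysis.
From mathcomp Require Import ring lra zify.
Import Order.TTheory GRing.Theory Num.Theory.
Import numFieldNormedType.Exports.
Local Open Scope ring_scope.


Set Implicit Arguments. Unset Strict Implicit. Unset Printing Implicit Defensive.

Section T1.
Variable R : realType.

Lemma A1 (x : R) : x%:A = x.
Proof. by rewrite /GRing.scale /= mulr1. Qed.

Lemma nonpos_deriv_le (h dh : R -> R) a b : a <= b ->
  (forall x : R, is_derive x (1:R) h (dh x)) ->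
  (forall x, a <= x <= b -> dh x <= 0) -> h b <= h a.
Proof.
move=> ab hd dle.
have [c c01 E] := @MVT_segment R h dh a b ab (fun x _ => hd x)
  (derivable_within_continuous (fun x _ => @ex_derive _ _ _ _ _ _ _ (hd x))).
rewrite -subr_le0 E; apply: mulr_le0_ge0; last by rewrite subr_ge0.
by apply: dle; move: c01; rewrite in_itv.
Qed.

Lemma der_lin (g : R -> R) dg c t : is_derive t (1:R) g dg ->
  is_derive t (1:R) (fun x : R => g x - c * x) (dg - c).
Proof.
move=> H.
have H3 := is_deriveZ c (is_derive_id t (1:R)).
have H4 := is_deriveB H H3.
apply: is_derive_eq H4 _.
by rewrite A1.
Qed.

Lemma der_quad (g : R -> R) dg c d t : is_derive t (1:R) g dg ->
  is_derive t (1:R) (fun x : R => g x - c * x - d * x^+2) (dg - c - d * (2 * t)).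
Proof.
move=> H.
have H1 := is_deriveX 2 (is_derive_id t (1:R)).
have H2 := is_deriveZ d H1.
have H3 := is_deriveZ c (is_derive_id t (1:R)).
have H4 := is_deriveB (is_deriveB H H3) H2.
apply: is_derive_eq H4 _.
by rewrite !A1 expr1.
Qed.

Lemma taylor_up (g g1 g2 : R -> R) B :
  (forall x : R, is_derive x (1:R) g (g1 x)) ->
  (forall x : R, is_derive x (1:R) g1 (g2 x)) ->
  (forall x, g2 x <= B) -> g 1 - g 0 - g1 0 <= B / 2.
Proof.
move=> dg dg1 g2B.
have st1 : forall x, 0 <= x -> g1 x - B * x <= g1 0.
  move=> x x0.
  have := @nonpos_deriv_le (fun t => g1 t - B * t) (fun t => g2 t - B) 0 x x0.
  rewrite mulr0 subr0; apply.
    by move=> t; apply: der_lin.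
  by move=> t _; rewrite subr_le0.
have := @nonpos_deriv_le (fun t => g t - g1 0 * t - (B/2) * t^+2)
   (fun t => g1 t - g1 0 - (B/2) * (2 * t)) 0 1 ler01.
rewrite /= !mulr0 expr0n /= mulr0 !subr0 mulr1 expr1n mulr1.
move=> H.
have : g 1 - g1 0 - B / 2 <= g 0.
  apply: H.
    by move=> t; apply: der_quad.
  move=> t /andP[t0 t1].
  rewrite mulrA divfK ?pnatr_eq0 // mulrC.
  by rewrite subr_le0 lerBlDl mulrC -lerBlDr st1.
lra.
Qed.

Lemma taylor_lo (g g1 g2 : R -> R) A :
  (forall x : R, is_derive x (1:R) g (g1 x)) ->
  (forall x : R, is_derive x (1:R) g1 (g2 x)) ->
  (forall x, A <= g2 x) -> A / 2 <= g 1 - g 0 - g1 0.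
Proof.
move=> dg dg1 g2A.
have := @taylor_up (fun x => - g x) (fun x => - g1 x) (fun x => - g2 x) (- A).
have N : forall (h : R -> R) dh x, is_derive x (1:R) h dh -> is_derive x (1:R) (fun x => - h x) (- dh).
  by move=> h dh x hd; apply: is_deriveN.
move/(_ (fun x => N _ _ _ (dg x)) (fun x => N _ _ _ (dg1 x))).
move=> H; have := H (fun x => ltac:(by rewrite lerN2)); lra.
Qed.
End T1.
Section Vec.
Variable R : realType.
Variable p : nat.
Local Notation V := ('rV[R]_p).
Implicit Types u v w : V.
Local Notation rst := (@Defs.restrict R p).

Definition dot (u v : V) : R := \sum_(i < p) u ord0 i * v ord0 i.
Definition sq (v : V) : R := \sum_(i < p) v ord0 i ^+ 2.
Definition inU (U : {set 'I_p}) (v : V) := forall i, i \notin U -> v ord0 i = 0.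

Lemma sqE v : sq v = dot v v.
Proof. by apply: eq_bigr => i _; rewrite expr2. Qed.
Lemma sq_ge0 v : 0 <= sq v.
Proof. by apply: sumr_ge0 => i _; rewrite sqr_ge0. Qed.
Lemma norm2E v : norm2 v = Num.sqrt (sq v).
Proof. by []. Qed.
Lemma dotC u v : dot u v = dot v u.
Proof. by apply: eq_bigr => i _; rewrite mulrC. Qed.
Lemma dotDl u v w : dot (u + v) w = dot u w + dot v w.
Proof. by rewrite /dot -big_split; apply: eq_bigr => i _; rewrite mxE mulrDl. Qed.
Lemma dotNl u w : dot (- u) w = - dot u w.
Proof. by rewrite /dot -sumrN; apply: eq_bigr => i _; rewrite mxE mulNr. Qed.
Lemma dotZl (a : R) u w : dot (a *: u) w = a * dot u w.
Proof. by rewrite /dot mulr_sumr; apply: eq_bigr => i _; rewrite mxE mulrA. Qed.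
Lemma dotBl u v w : dot (u - v) w = dot u w - dot v w.
Proof. by rewrite dotDl dotNl. Qed.
Lemma dotDr u v w : dot w (u + v) = dot w u + dot w v.
Proof. by rewrite !(dotC w) dotDl. Qed.
Lemma dotBr u v w : dot w (u - v) = dot w u - dot w v.
Proof. by rewrite !(dotC w) dotBl. Qed.
Lemma dotZr (a : R) u w : dot w (a *: u) = a * dot w u.
Proof. by rewrite !(dotC w) dotZl. Qed.
Lemma dotNr u w : dot w (- u) = - dot w u.
Proof. by rewrite !(dotC w) dotNl. Qed.

Lemma sqD (a b : V) : sq (a + b) = sq a + 2 * dot a b + sq b.
Proof. rewrite !sqE dotDl !dotDr (dotC b a); ring. Qed.
Lemma sqB (a b : V) : sq (a - b) = sq a - 2 * dot a b + sq b.
Proof. rewrite !sqE dotBl !dotBr (dotC b a); ring. Qed.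
Lemma sqZ (c : R) (a : V) : sq (c *: a) = c ^+ 2 * sq a.
Proof. rewrite !sqE dotZl dotZr; ring. Qed.
Lemma sqN (a : V) : sq (- a) = sq a.
Proof. by rewrite !sqE dotNl dotNr opprK. Qed.

Lemma sq_eq0 (b : V) : sq b = 0 -> b = 0.
Proof.
move=> /eqP; rewrite psumr_eq0 => [/allP H|i _]; last by rewrite sqr_ge0.
apply/rowP => i; rewrite mxE; apply/eqP; rewrite -sqrf_eq0.
by have := H i (mem_index_enum i); rewrite implyTb.
Qed.

Lemma CS (a b : V) : dot a b ^+ 2 <= sq a * sq b.
Proof.
have [b0|bpos] := eqVneq (sq b) 0.
  rewrite b0 mulr0; move/sq_eq0: b0 => ->.
  by rewrite /dot big1 ?expr0n // => i _; rewrite mxE mulr0.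
have sbp : 0 < sq b by rewrite lt0r bpos sq_ge0.
have := sq_ge0 (a - (dot a b / sq b) *: b).
rewrite sqB sqZ dotZr => H.
have H2 : 0 <= sq a * sq b - dot a b ^+ 2.
  have -> : sq a * sq b - dot a b ^+ 2 =
     (sq a - 2 * (dot a b / sq b * dot a b) + (dot a b / sq b) ^+ 2 * sq b) * sq b.
    field; by [].
  by apply: mulr_ge0 => //; apply: ltW.
by rewrite -subr_ge0.
Qed.

Lemma CS' (a b : V) : dot a b <= norm2 a * norm2 b.
Proof.
rewrite !norm2E -sqrtrM ?sq_ge0 //.
have [d0|d0] := lerP (dot a b) 0.
  by apply: le_trans d0 _; exact: sqrtr_ge0.
rewrite -(ler_pXn2r (n:=2)) // ?nnegrE ?sqrtr_ge0 ?(ltW d0) // sqr_sqrtr ?mulr_ge0 ?sq_ge0 //.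
exact: CS.
Qed.

Lemma norm2_ge0 (a : V) : 0 <= norm2 a.
Proof. exact: sqrtr_ge0. Qed.

Lemma norm2_sq (a : V) : norm2 a ^+ 2 = sq a.
Proof. by rewrite norm2E sqr_sqrtr // sq_ge0. Qed.

Lemma norm2D (a b : V) : norm2 (a + b) <= norm2 a + norm2 b.
Proof.
rewrite -(ler_pXn2r (n:=2)) // ?nnegrE ?addr_ge0 ?norm2_ge0 //.
rewrite norm2_sq sqD sqrrD !norm2_sq.
have := CS' a b; lra.
Qed.

Lemma norm2_le_sq (a b : V) : sq a <= sq b -> norm2 a <= norm2 b.
Proof. by move=> H; rewrite !norm2E ler_sqrt // sq_ge0. Qed.

Lemma sq_le_norm2 (a b : V) : norm2 a <= norm2 b -> sq a <= sq b.
Proof. by move=> H; rewrite -!norm2_sq ler_pXn2r // nnegrE norm2_ge0. Qed.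

Lemma restrictE v U i : rst v U ord0 i = if i \in U then v ord0 i else 0.
Proof. by rewrite mxE. Qed.

Lemma sq_rst v U : sq (rst v U) = \sum_(i in U) v ord0 i ^+ 2.
Proof.
rewrite /sq (bigID (mem U)) /= [X in _ + X]big1 ?addr0.
  by apply: eq_bigr => i iU; rewrite restrictE iU.
by move=> i /negbTE iU; rewrite restrictE iU expr0n.
Qed.

Lemma restrict_id v U : inU U v -> rst v U = v.
Proof.
move=> H; apply/rowP => i; rewrite mxE.
case: ifP => // /negbT iU. by rewrite H.
Qed.

Lemma dot_restrict_in v d U : inU U d -> dot (rst v U) d = dot v d.
Proof.
move=> H; apply: eq_bigr => i _; rewrite mxE.
case: ifP => // /negbT iU; by rewrite H // !mulr0.
Qed.

Lemma dot_restrict_self v U : dot v (rst v U) = sq (rst v U).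
Proof.
rewrite sqE; apply: eq_bigr => i _; rewrite !mxE.
by case: ifP; rewrite ?mulr0.
Qed.

Lemma inU_restrict v U : inU U (rst v U).
Proof. by move=> i /negbTE iU; rewrite mxE iU. Qed.

Lemma inUD U a b : inU U a -> inU U b -> inU U (a + b).
Proof. by move=> Ha Hb i iU; rewrite mxE Ha // Hb // addr0. Qed.
Lemma inUN U a : inU U a -> inU U (- a).
Proof. by move=> Ha i iU; rewrite mxE Ha // oppr0. Qed.
Lemma inUB U a b : inU U a -> inU U b -> inU U (a - b).
Proof. by move=> Ha Hb; apply: inUD => //; apply: inUN. Qed.
Lemma inUZ U (c : R) a : inU U a -> inU U (c *: a).
Proof. by move=> Ha i iU; rewrite mxE Ha // mulr0. Qed.
Lemma inU0 U : inU U 0.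
Proof. by move=> i _; rewrite mxE. Qed.
Lemma inU_sub (A B : {set 'I_p}) a : A \subset B -> inU A a -> inU B a.
Proof.
move=> /fintype.subsetP AB Ha i iB; apply: Ha; apply/negP => /AB; by rewrite (negbTE iB).
Qed.
Lemma inU_vsupp (U : {set _}) a : inU U a -> vsupp a \subset U.
Proof.
move=> Ha; apply/fintype.subsetP => i; rewrite inE; apply: contraR => iU.
by rewrite Ha.
Qed.
Lemma vsupp_inU (U : {set _}) (a : V) : vsupp a \subset U -> inU U a.
Proof.
move=> /fintype.subsetP H i iU; apply/eqP; apply: contraR iU => ai.
by apply: H; rewrite inE.
Qed.
End Vec.
Section T2.
Variable R : realType.
Variable p : nat.
Local Notation V := ('rV[R]_p).

Lemma line_fun_eq (F : V -> R) (x d : V) (t : R) :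
  (fun h : R => h^-1 *: (((fun s : R => F (x + s *: d)) \o shift t) (h *: (1:R)) - F (x + t *: d)))
  = (fun h : R => h^-1 *: ((F \o shift (x + t *: d)) (h *: d) - F (x + t *: d))).
Proof.
apply: funext => h /=; congr (_ *: (F _ - _)).
by rewrite A1 scalerDl addrCA addrA.
Qed.

Lemma line_is_derive (F : V -> R) (x d : V) (t : R) :
  derivable F (x + t *: d) d ->
  is_derive t (1:R) (fun s : R => F (x + s *: d)) ('D_d F (x + t *: d)).
Proof.
move=> H; split.
  by rewrite /derivable line_fun_eq.
by rewrite /derive line_fun_eq.
Qed.


Lemma derive_grad (f : V -> R) (x d : V) : differentiable f x ->
  'D_d f x = dot (grad f x) d.
Proof.
move=> df; rewrite deriveE // {1}(row_sum_delta d) linear_sum /dot.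
apply: eq_bigr => i _; rewrite linearZ /= mxE deriveE //.
by rewrite mulrC.
Qed.

Lemma taylor_mv (f : V -> R) (x d : V) A B :
  twice_differentiable f ->
  (forall t : R, A <= hess_quad f (x + t *: d) d <= B) ->
  A / 2 <= f (x + d) - f x - dot (grad f x) d <= B / 2.
Proof.
move=> [d1 d2] hb.
have dg : forall t : R, is_derive t (1:R) (fun s : R => f (x + s *: d)) ('D_d f (x + t *: d)).
  by move=> t; apply: line_is_derive; apply: diff_derivable.
have dg1 : forall t : R, is_derive t (1:R) (fun s : R => 'D_d f (x + s *: d)) (hess_quad f (x + t *: d) d).
  by move=> t; apply: line_is_derive; apply: diff_derivable.
have e0 : x + 0 *: d = x by rewrite scale0r addr0.
have e1 : x + 1 *: d = x + d by rewrite scale1r.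
have := @taylor_up R _ _ _ _ dg dg1 (fun t => proj2 (andP (hb t))).
have := @taylor_lo R _ _ _ _ dg dg1 (fun t => proj1 (andP (hb t))).
rewrite /= e0 e1 -derive_grad // => -> -> //.
Qed.
End T2.
Section Sel.
Variable R : realType.
Variable M : nat.

Lemma select (c : 'I_M -> R) (r : nat) : forall (J : {set 'I_M}),
  (forall j, 0 <= c j) -> (r <= #|J|)%N -> exists K : {set 'I_M},
  K \subset J /\ #|K| = r /\ #|J|%:R * \sum_(j in K) c j <= r%:R * \sum_(j in J) c j.
Proof.
elim: r => [|r IH] J c0 rJ.
  exists finset.set0; split; first exact: finset.sub0set.
  by rewrite cards0 big_set0 mulr0 mul0r; split.
have [j1 j1J] : exists j1, j1 \in J.
  by apply/set0Pn; rewrite -card_gt0; apply: leq_trans rJ.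
have [j0 j0J0 j0min] := arg_minP c j1J.
have j0J : j0 \in J by exact: j0J0.
set J' := J :\ j0.
have cJ : #|J| = #|J'|.+1 by rewrite (cardsD1 j0 J) j0J.
have rJ' : (r <= #|J'|)%N by move: rJ; rewrite cJ.
have [K' [K'J' [cK' HK']]] := IH J' c0 rJ'.
have j0K' : j0 \notin K'.
  by apply/negP => /(fintype.subsetP K'J'); rewrite !inE eqxx.
exists (j0 |: K'); split.
  by apply/fintype.subsetP => j; rewrite !inE => /orP[/eqP->//|/(fintype.subsetP K'J')]; rewrite !inE => /andP[].
rewrite cardsU1 j0K' cK'; split => //.
rewrite big_setU1 //= (big_setD1 j0 j0J) /=.
fold J'.
set S' := \sum_(j in J') c j.
set SK := \sum_(j in K') c j.
have S'ge : #|J'|%:R * c j0 <= S'.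
  rewrite mulr_natl -sumr_const; apply: ler_sum => j; rewrite !inE => /andP[_ jJ].
  exact: j0min.
have SK0 : 0 <= SK by apply: sumr_ge0.
have S'0 : 0 <= S' by apply: sumr_ge0.
have c00 := c0 j0.
have rle : (r <= #|J'|)%N := rJ'.
rewrite cJ.
have [n0|npos] := eqVneq #|J'| 0%N.
  have r0 : r = 0%N by move: rle; rewrite n0 leqn0 => /eqP.
  have -> : SK = 0.
    rewrite /SK; move: cK'; rewrite r0 => /cards0_eq ->; by rewrite big_set0.
  rewrite n0 r0; lra.
move: HK' S'ge rle npos; set n := #|J'| => HK' S'ge rle npos.
rewrite -(ler_nat R) in rle.
have np : (0 : R) < n%:R by rewrite ltr0n lt0n.
rewrite -!natr1.
have : (n%:R - r%:R) * (S' - n%:R * c j0) >= 0 :> R.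
  by apply: mulr_ge0; lra.
move=> key.
rewrite -(ler_pM2l np).
have n1 : (0:R) <= n%:R + 1 by lra.
have H2 := ler_wpM2l n1 HK'.
set a := n%:R in np n1 H2 key rle *. set b := r%:R in H2 key rle *.
have E1 : a * ((a + 1) * (c j0 + SK)) = a * (a+1) * c j0 + (a + 1) * (a * SK) by ring.
have E2 : a * ((b + 1) * (c j0 + S')) = a * (a+1) * c j0 + (a + 1) * (b * S') + (a - b) * (S' - a * c j0) by ring.
rewrite -/SK -/S' in H2. rewrite E1 E2; lra.
Qed.
End Sel.


Lemma bigminn_le (T : finType) (P : pred T) (F : T -> nat) x0 j :
  P j -> (\big[minn/x0]_(i | P i) F i <= F j)%N.
Proof.
move=> Pj; move: (mem_index_enum j); elim: (index_enum T) => [//|a r IH].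
rewrite inE big_cons => /orP[/eqP<-|/IH H]; first by rewrite Pj geq_minl.
by case: (P a) => //; rewrite geq_min H orbT.
Qed.

Lemma bigminn_case (T : finType) (P : pred T) (F : T -> nat) x0 :
  \big[minn/x0]_(i | P i) F i = x0 \/ exists i, P i /\ \big[minn/x0]_(i | P i) F i = F i.
Proof.
apply: (big_rec (fun v => v = x0 \/ exists i, P i /\ v = F i)); first by left.
move=> i x Pi [->|[j [Pj ->]]].
  by case: (leqP (F i) x0) => H; [right; exists i|left].
by case: (leqP (F i) (F j)) => H; right; [exists i|exists j].
Qed.

Section Groups.
Variable R : realType.
Variables p M : nat.
Variable G : 'I_M -> {set 'I_p}.
Local Notation V := ('rV[R]_p).

Definition cover (I : {set 'I_M}) : {set 'I_p} := \bigcup_(j in I) G j.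

Lemma Gsupp_le (S : {set 'I_p}) I : S \subset cover I -> (Gsupp_card G S <= #|I|)%N.
Proof. by move=> H; rewrite /Gsupp_card; exact: (@bigminn_le _ _ (fun I : {set 'I_M} => #|I|) M I H). Qed.

Lemma Gsupp_ex (S : {set 'I_p}) : groups_cover G ->
  exists I, S \subset cover I /\ (#|I| <= Gsupp_card G S)%N.
Proof.
move=> gc; rewrite /Gsupp_card.
case: (@bigminn_case _ (fun I : {set 'I_M} => S \subset cover I) (fun I : {set 'I_M} => #|I|) M) => [->|[I [HI ->]]]; last by exists I.
exists [set: 'I_M]; rewrite cardsT card_ord; split => //.
apply/fintype.subsetP => i _.
have : i \in \bigcup_(j < M) G j by rewrite gc finset.in_setT.
by move/bigcupP => [j _ ij]; apply/bigcupP; exists j; rewrite ?finset.in_setT.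
Qed.

Lemma gnorm0_le (v : V) I : inU (cover I) v -> (gnorm0 G v <= #|I|)%N.
Proof. by move=> H; apply: Gsupp_le; apply: inU_vsupp. Qed.

Lemma gnorm0_ex (v : V) : groups_cover G ->
  exists I, inU (cover I) v /\ (#|I| <= gnorm0 G v)%N.
Proof.
move=> gc; have [I [H1 H2]] := Gsupp_ex (vsupp v) gc.
by exists I; split => //; apply: vsupp_inU.
Qed.

Lemma coverU I J : cover (I :|: J) = cover I :|: cover J.
Proof. by rewrite /cover finset.bigcup_setU. Qed.

Lemma cover_sub (I J : {set 'I_M}) : I \subset J -> cover I \subset cover J.
Proof.
move=> /fintype.subsetP H; apply/fintype.subsetP => i /bigcupP [j jI ij].
by apply/bigcupP; exists j => //; apply: H.
Qed.

Lemma cover_mem (I : {set 'I_M}) j i : j \in I -> i \in G j -> i \in cover I.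
Proof. by move=> jI ij; apply/bigcupP; exists j. Qed.

End Groups.


Section Proj.
Variable R : realType.
Variables p M : nat.
Variable G : 'I_M -> {set 'I_p}.
Local Notation V := ('rV[R]_p).
Local Notation rst := (@Defs.restrict R p).
Local Notation cover := (cover G).

Lemma sq_rst_sub (g : V) (A : {set 'I_p}) :
  sq (rst g A - g) = sq g - \sum_(i in A) g ord0 i ^+ 2.
Proof.
rewrite /sq [in RHS](bigID (mem A)) /= addrC addrK.
rewrite (bigID (mem A)) /= big1 ?add0r.
  by apply: eq_bigr => i /negbTE iA; rewrite !mxE iA sub0r sqrrN.
by move=> i iA; rewrite !mxE iA subrr expr0n.
Qed.

Lemma sum_if (A : {set 'I_p}) (F : 'I_p -> R) :
  \sum_(i in A) F i = \sum_i (if i \in A then F i else 0).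
Proof. by rewrite big_mkcond. Qed.

Lemma proj_eq (k : nat) (g y : V) (J : {set 'I_M}) :
  is_proj G k g y -> inU (cover J) y -> (#|J| <= k)%N -> y = rst g (cover J).
Proof.
move=> [_ opt] yW Jk.
have := opt (rst g (cover J)) (leq_trans (gnorm0_le (@inU_restrict _ _ g (cover J))) Jk).
move/sq_le_norm2.
have E : sq (y - g) = sq (y - rst g (cover J)) + sq (rst g (cover J) - g).
  rewrite /sq -big_split; apply: eq_bigr => i _ /=; rewrite !mxE.
  case: ifP => iW; first by rewrite subrr expr0n addr0.
  rewrite yW ?iW //; ring.
rewrite E -lerBrDr subrr => H.
have : sq (y - rst g (cover J)) = 0 by apply/eqP; rewrite eq_le H sq_ge0.
by move/sq_eq0/eqP; rewrite subr_eq0 => /eqP.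
Qed.


Lemma young (a b s : R) : 0 < s -> (a - b) ^+ 2 <= (1 + s) * b ^+ 2 + (1 + s^-1) * a ^+ 2.
Proof.
move=> s0; rewrite -subr_ge0.
have -> : (1 + s) * b ^+ 2 + (1 + s^-1) * a ^+ 2 - (a - b) ^+ 2 = (s * b + a) ^+ 2 / s.
  by field; rewrite gt_eqF.
by apply: divr_ge0; [apply: sqr_ge0|apply: ltW].
Qed.

Lemma proj_lemma (k kstar : nat) (s : R) (g y wstar : V) (J Is : {set 'I_M}) (U : {set 'I_p}) :
  is_proj G k g y -> inU (cover J) y -> (#|J| <= k)%N ->
  inU (cover Is) wstar -> (#|Is| <= kstar)%N -> (kstar <= k)%N -> (0 < k)%N ->
  cover J \subset U -> cover Is \subset U ->
  0 < s -> kstar%:R <= s^+2 * k%:R ->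
  sq (y - wstar) <= (1 + s)^+2 * sq (rst g U - wstar).
Proof.
move=> hp yW Jk wS Isk kk kpos WU SU s0 ks.
have yE := proj_eq hp yW Jk.
have [M0|Mpos] := posnP M.
  have -> : y - wstar = 0.
    apply/rowP => i; rewrite !mxE.
    have niW : forall I, i \notin cover I.
      by move=> I; apply/negP => /bigcupP [j]; have := ltn_ord j; lia.
    by rewrite yW ?wS ?niW // subrr.
  rewrite /sq big1 ?mulr_ge0 ?sq_ge0 ?sqr_ge0 ?addr_ge0 ?ltW // => i _; by rewrite mxE expr0n.
set W := cover J.
set Us := cover Is.
pose jd := Ordinal Mpos.
pose jf i := odflt jd [pick j in J | i \in G j].
have jfP : forall i, i \in W -> jf i \in J /\ i \in G (jf i).
  move=> i /bigcupP [j jJ ij]; rewrite /jf; case: pickP => [j' /andP[H1 H2]|/(_ j)] //=.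
  by rewrite jJ ij.
pose c j := \sum_(i | (i \in W :\: Us) && (jf i == j)) g ord0 i ^+ 2.
have c0 : forall j, 0 <= c j by move=> j; apply: sumr_ge0 => i _; apply: sqr_ge0.
have [K [KJ [cK HK]]] := @select R M c (#|J| - (k - kstar))%N J c0 (leq_subr _ _).
set SK := \sum_(j in K) c j in HK *.
set SJ := \sum_(j in J) c j in HK *.
have SK0 : 0 <= SK by apply: sumr_ge0.
have SJ0 : 0 <= SJ by apply: sumr_ge0.
have Hkey : k%:R * SK <= kstar%:R * SJ.
  have [r0|rpos] := posnP (#|J| - (k - kstar))%N.
    move: cK; rewrite r0 => /cards0_eq K0.
    have -> : SK = 0 by rewrite /SK K0 big_set0.
    by rewrite mulr0; apply: mulr_ge0.
  have rk : ((#|J| - (k - kstar)) * k <= kstar * #|J|)%N by nia.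
  have Jpos : (0 < #|J|)%N by lia.
  have Jp : (0:R) < #|J|%:R by rewrite ltr0n.
  rewrite -(ler_pM2l Jp).
  have rkR : ((#|J| - (k - kstar))%N%:R * k%:R <= kstar%:R * #|J|%:R :> R).
    by rewrite -!natrM ler_nat.
  have H1 := ler_wpM2l (ler0n R k) HK.
  have H2 := ler_wpM2r SJ0 rkR.
  set a := #|J|%:R in Jp HK H1 H2 rkR *.
  set b := (#|J| - (k - kstar))%N%:R in HK H1 H2 rkR *.
  have E1 : a * (k%:R * SK) = k%:R * (a * SK) by ring.
  have E2 : a * (kstar%:R * SJ) = kstar%:R * a * SJ by ring.
  have E3 : k%:R * (b * SJ) = b * k%:R * SJ by ring.
  rewrite E1 E2; rewrite E3 in H1; lra.
set W' := cover ((J :\: K) :|: Is).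
have W'card : (#|(J :\: K) :|: Is| <= k)%N.
  have := (leq_card_setU (J :\: K) Is).1; rewrite cardsDS // cK; lia.
have opt : \sum_(i in W') g ord0 i ^+ 2 <= \sum_(i in W) g ord0 i ^+ 2.
  have := hp.2 (rst g W') (leq_trans (gnorm0_le (@inU_restrict _ _ g W')) W'card).
  move/sq_le_norm2; rewrite yE !sq_rst_sub; lra.
pose GK := \sum_(i | (i \in W :\: Us) && (jf i \in K)) g ord0 i ^+ 2.
have GKE : GK = SK.
  rewrite /GK (partition_big jf (mem K)); last by move=> i /andP[].
  apply: eq_bigr => j jK; apply: eq_bigl => i.
  by rewrite -andbA; congr (_ && _); case: eqP => [->|_]; rewrite ?andbT ?andbF //; exact: jK.
have GBE : \sum_(i in W :\: Us) g ord0 i ^+ 2 = SJ.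
  rewrite (partition_big jf (mem J)); last by move=> i; rewrite !inE => /andP[_ /jfP[]].
  by apply: eq_bigr => j jJ.
have UsW' : Us \subset W' by rewrite /W' coverU finset.subsetUr.
have GD : \sum_(i in Us :\: W) g ord0 i ^+ 2 <= GK.
  have A1 : \sum_(i in Us :\: W) g ord0 i ^+ 2 + \sum_(i in W :&: W') g ord0 i ^+ 2
       <= \sum_(i in W') g ord0 i ^+ 2.
    rewrite !sum_if -big_split /=; apply: ler_sum => i _.
    rewrite !inE; case iW: (i \in W); case iUs: (i \in Us); case iW': (i \in W') => //=;
      rewrite ?addr0 ?add0r ?sqr_ge0 //.
    by move: (fintype.subsetP UsW' i); rewrite iUs iW' => /(_ isT).
  have A2 : \sum_(i in W) g ord0 i ^+ 2 <= \sum_(i in W :&: W') g ord0 i ^+ 2 + GK.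
    rewrite /GK [X in _ + X]big_mkcond !sum_if -big_split /=; apply: ler_sum => i _.
    rewrite !inE; case iW: (i \in W); last first.
      by rewrite /= add0r; case: ifP => _; rewrite ?sqr_ge0.
    case iW': (i \in W') => /=.
      by case: ifP => _; rewrite ?addr0 // lerDl sqr_ge0.
    have iUs : i \notin Us by apply/negP => /(fintype.subsetP UsW'); rewrite iW'.
    rewrite iUs /= add0r.
    have [jJ ij] := jfP i iW.
    case jK: (jf i \in K) => //.
    exfalso; move/negbT: iW'; apply/negP; rewrite negbK /W' coverU inE.
    by apply/orP; left; apply: (cover_mem (j := jf i)) => //; rewrite inE jK jJ.
  lra.
set e := rst g U - wstar.
have eE : forall i, i \in U -> e ord0 i = g ord0 i - wstar ord0 i.
  by move=> i iU; rewrite !mxE iU.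
have WUi : forall i, i \in W -> i \in U by move=> i; apply: (fintype.subsetP WU).
have SUi : forall i, i \in Us -> i \in U by move=> i; apply: (fintype.subsetP SU).
set EW := \sum_(i in W) e ord0 i ^+ 2.
set ED := \sum_(i in Us :\: W) e ord0 i ^+ 2.
set GDs := \sum_(i in Us :\: W) g ord0 i ^+ 2 in GD *.
have EW0 : 0 <= EW by apply: sumr_ge0 => i _; apply: sqr_ge0.
have ED0 : 0 <= ED by apply: sumr_ge0 => i _; apply: sqr_ge0.
have P1 : sq (y - wstar) <= EW + (1 + s) * ED + (1 + s^-1) * GDs.
  rewrite /EW /ED /GDs !mulr_sumr !sum_if -!big_split /=; apply: ler_sum => i _.
  rewrite yE !inE.
  case iW: (i \in W) => /=.
    by rewrite (eE i (WUi i iW)) !mxE iW !addr0.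
  rewrite !add0r.
  case iUs: (i \in Us) => /=.
    rewrite (eE i (SUi i iUs)) !mxE iW sub0r sqrrN.
    have := young (g ord0 i) (g ord0 i - wstar ord0 i) s0.
    have -> : g ord0 i - (g ord0 i - wstar ord0 i) = wstar ord0 i by ring.
    by [].

  by rewrite !mxE iW wS ?iUs // subrr expr0n addr0.
have P2 : SJ <= EW.
  rewrite -GBE /EW !sum_if; apply: ler_sum => i _; rewrite !inE.
  case iW: (i \in W); last by rewrite andbF.
  case iUs: (i \in Us) => /=; first by apply: sqr_ge0.
  by rewrite (eE i (WUi i iW)) wS ?iUs // subr0.
have P3 : EW + ED <= sq e.
  rewrite /EW /ED /sq !sum_if -big_split /=; apply: ler_sum => i _; rewrite !inE.
  by case: (i \in W); case: (i \in Us) => /=; rewrite ?addr0 ?add0r ?sqr_ge0.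
have kp : (0:R) < k%:R by rewrite ltr0n.
have HGD : GDs <= s ^+ 2 * EW.
  have : k%:R * SK <= k%:R * (s ^+ 2 * SJ).
    apply: (le_trans Hkey).
    have := ler_wpM2r SJ0 ks; rewrite mulrA (mulrC (s^+2)); lra.
  rewrite ler_pM2l // => H.
  have := ler_wpM2l (sqr_ge0 s) P2. rewrite -GKE in H. lra.
have sinv : s * s^-1 = 1 by rewrite mulfV // gt_eqF.
have : sq (y - wstar) <= (1 + s + s^+2) * EW + (1 + s) * ED.
  apply: (le_trans P1).
  have si0 : 0 <= 1 + s^-1 by rewrite addr_ge0 // invr_ge0 ltW.
  have := ler_wpM2l si0 HGD.
  have -> : (1 + s^-1) * (s ^+ 2 * EW) = (s + s^+2) * EW.
    have -> : (1 + s^-1) * (s ^+ 2 * EW) = (s ^+ 2 + s * (s * s^-1)) * EW by ring.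
    by rewrite sinv mulr1 addrC.
  lra.
move=> H.
have := ler_wpM2l (sqr_ge0 (1 + s)) P3.
nra.
Qed.
End Proj.


Section Contract.
Variable R : realType.
Variable p : nat.
Local Notation V := ('rV[R]_p).
Local Notation rst := (@Defs.restrict R p).
Variable f : V -> R.
Variable U : {set 'I_p}.
Variables alpha L : R.
Hypothesis td : twice_differentiable f.
Hypothesis hb : forall v, inU U v -> forall u, alpha * sq u <= hess_quad f v u <= L * sq u.

Lemma LSSC (a b : V) : inU U a -> inU U b ->
  alpha / 2 * sq (b - a) <= f b - f a - dot (grad f a) (b - a) <= L / 2 * sq (b - a).
Proof.
move=> Ua Ub.
have := @taylor_mv R p f a (b - a) (alpha * sq (b - a)) (L * sq (b - a)) td.
have eb : a + (b - a) = b by rewrite addrC subrK.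
have ea : forall c : R, c * sq (b - a) / 2 = c / 2 * sq (b - a) by move=> c; rewrite mulrAC.
rewrite eb !ea; apply => t; apply: hb.
by apply: inUD => //; apply: inUZ; apply: inUB.
Qed.

Lemma contract (x y : V) : 0 < alpha -> 0 < L -> inU U x -> inU U y ->
  sq ((x - y) - L^-1 *: rst (grad f x - grad f y) U) <= (1 - alpha / L) * sq (x - y).
Proof.
move=> a0 L0 Ux Uy.
set gx := grad f x; set gy := grad f y.
set DU := rst (gx - gy) U; set d := x - y; set eta := L^-1.
have UD : inU U DU by apply: inU_restrict.
have Ud : inU U d by apply: inUB.
have etaL : eta * L = 1 by rewrite mulVf // gt_eqF.
have eta0 : 0 < eta by rewrite invr_gt0.
set z1 := x - eta *: DU; set z2 := y + eta *: DU.
have Uz1 : inU U z1 by apply: inUB => //; apply: inUZ.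
have Uz2 : inU U z2 by apply: inUD => //; apply: inUZ.
have sD0 := sq_ge0 DU.
have sd0 := sq_ge0 d.
have keyD : dot gx DU - dot gy DU = sq DU by rewrite -dotBl dot_restrict_self.
have keyd : dot d DU = dot gx d - dot gy d by rewrite dotC dot_restrict_in // dotBl.
have /andP[H1 _] := LSSC Uy Uz1.
have /andP[_ H2] := LSSC Ux Uz1.
have /andP[H3 _] := LSSC Ux Uz2.
have /andP[_ H4] := LSSC Uy Uz2.
have /andP[H5 _] := LSSC Ux Uy.
have /andP[H6 _] := LSSC Uy Ux.
rewrite -/gx -/gy in H1 H2 H3 H4 H5 H6.
have e1 : z1 - y = d - eta *: DU by rewrite /z1 /d; rewrite addrAC.
have e2 : z1 - x = - (eta *: DU) by rewrite /z1 addrAC subrr add0r.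
have e3 : z2 - x = - d + eta *: DU by rewrite /z2 /d opprB addrAC addrC.
have e4 : z2 - y = eta *: DU by rewrite /z2 addrAC subrr add0r.
have e5 : x - y = d by [].
have e6 : y - x = - d by rewrite opprB.
rewrite e1 dotBr dotZr in H1.
rewrite e2 dotNr dotZr sqN sqZ in H2.
rewrite e3 dotDr dotNr dotZr in H3.
rewrite e4 dotZr sqZ in H4.
rewrite e6 dotNr sqN in H5.
rewrite e5 in H6.
rewrite sqB dotZr keyd sqZ.
have a2 : 0 <= alpha / 2 by apply: divr_ge0 => //; apply: ltW.
have ha := mulr_ge0 a2 (sq_ge0 (d - eta *: DU)).
have hb2 := mulr_ge0 a2 (sq_ge0 (- d + eta *: DU)).
have E1 : L / 2 * (eta ^+ 2 * sq DU) = eta / 2 * sq DU.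
  by rewrite /eta; field; rewrite gt_eqF.
rewrite E1 in H2 H4.
have Hm : eta * sq DU <= dot gx d - dot gy d.
  have kD : eta * dot gx DU - eta * dot gy DU = eta * sq DU by rewrite -mulrBr keyD.
  lra.
have Ha : alpha * sq d <= dot gx d - dot gy d by lra.
have : eta ^+ 2 * sq DU <= eta * (dot gx d - dot gy d).
  by rewrite expr2 -mulrA ler_wpM2l // ltW.
have : eta * (alpha * sq d) <= eta * (dot gx d - dot gy d) by rewrite ler_wpM2l // ltW.
have -> : alpha / L = eta * alpha by rewrite mulrC.
lra.
Qed.
End Contract.


Section Misc.
Variable R : realType.
Variable p : nat.
Local Notation V := ('rV[R]_p).
Local Notation rst := (@Defs.restrict R p).

Lemma pow_bound (a : R) (n : nat) : 0 <= a <= 1 -> (1 - a) ^+ n * (1 + n%:R * a) <= 1.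
Proof.
move=> /andP[a0 a1]; elim: n => [|n IH]; first by rewrite expr0 mul0r addr0 mulr1.
rewrite exprSr -natr1.
have h0 : 0 <= (1 - a) ^+ n by apply: exprn_ge0; lra.
have : (1 - a) * (1 + (n%:R + 1) * a) <= 1 + n%:R * a.
  have n0 : (0:R) <= n%:R := ler0n _ _.
  have : 0 <= a * a * (n%:R + 1) by apply: mulr_ge0; [apply: mulr_ge0|lra].
  lra.
move/(ler_wpM2l h0) => H; apply: le_trans IH; by rewrite -mulrA.
Qed.

Lemma norm2N (v : V) : norm2 (- v) = norm2 v.
Proof. by rewrite !norm2E sqN. Qed.

Lemma norm2Z (c : R) (v : V) : 0 <= c -> norm2 (c *: v) = c * norm2 v.
Proof.
move=> c0; rewrite !norm2E sqZ sqrtrM ?sqr_ge0 // sqrtr_sqr ger0_norm //.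
Qed.

Lemma norm2_sq_le (a : V) (c : R) : 0 <= c -> sq a <= c ^+ 2 -> norm2 a <= c.
Proof.
move=> c0 H; rewrite -(ler_pXn2r (n:=2)) // ?nnegrE ?norm2_ge0 //.
by rewrite norm2_sq.
Qed.

Lemma sq_rstU (v : V) A B : sq (rst v (A :|: B)) <= sq (rst v A) + sq (rst v B).
Proof.
rewrite /sq -big_split; apply: ler_sum => i _; rewrite !mxE inE.
by case: (i \in A); case: (i \in B) => /=; rewrite ?expr0n ?addr0 ?add0r ?lerDl ?sqr_ge0.
Qed.

Lemma max_restr_ge0 M (G : 'I_M -> {set 'I_p}) k (v : V) : 0 <= max_restr G k v.
Proof. exact: bigmax_ge_id. Qed.

Lemma max_restr_le M (G : 'I_M -> {set 'I_p}) k (v : V) S :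
  (Gsupp_card G S <= k)%N -> norm2 (rst v S) <= max_restr G k v.
Proof. by move=> H; rewrite /max_restr; apply: le_bigmax_cond. Qed.

End Misc.


Unset Implicit Arguments.

Theorem theorem3 (R : realType) :
  exists c1 c2 : R, 0 < c1 /\ 0 < c2 /\
  forall (p M : nat) (G : 'I_M -> {set 'I_p}) (f : 'rV[R]_p -> R)
    (kstar k : nat) (alpha L : R) (wstar : 'rV[R]_p)
    (w : nat -> 'rV[R]_p) (eps : R) (T : nat),
    groups_cover G ->
    twice_differentiable f ->
    (0 < kstar)%N ->
    (gnorm0 G wstar <= kstar)%N ->
    (forall v : 'rV[R]_p, (gnorm0 G v <= kstar)%N -> f wstar <= f v) ->
    0 < alpha ->
    RSC_RSS G f (k.*2 + kstar) alpha L ->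
    c1 * (L / alpha) ^+ 2 * kstar%:R <= k%:R ->
    w 0%N = 0 ->
    IHT_run G f k (L^-1) w ->
    0 < eps ->
    c2 * (L / alpha) * (norm2 wstar / eps) <= T%:R ->
    norm2 (w T - wstar) <=
      eps + 10 * L / alpha * ((2 / L) * max_restr G k (grad f wstar)).
Proof.
exists 16, 4; split; first by [].
split; first by [].
move=> p M G f kstar k alpha L wstar w eps T gc td kpos wsk _ a0 rsc hk w0 iht e0 hT.
set m := max_restr G k (grad f wstar).
have m0 : 0 <= m by apply: max_restr_ge0.
have [p0|ppos] := posnP p.
  have -> : norm2 (w T - wstar) = 0.
    by rewrite norm2E /sq big1 ?sqrtr0 // => i; have := ltn_ord i; lia.
  have [->|L0] := eqVneq L 0.
    by rewrite mulr0 mul0r mul0r addr0 ltW.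
  have -> : 10 * L / alpha * (2 / L * m) = 20 * m / alpha by field; rewrite L0 gt_eqF.
  by apply: addr_ge0; [apply: ltW|apply: divr_ge0; [apply: mulr_ge0|apply: ltW]].
have aL : alpha <= L.
  pose i0 := Ordinal ppos.
  have g0 : (gnorm0 G (0 : 'rV[R]_p) <= k.*2 + kstar)%N.
    have := @gnorm0_le R p M G 0 finset.set0 (@inU0 _ _ _); rewrite cards0; lia.
  have [H1 H2] := rsc 0 g0 (delta_mx ord0 i0).
  have s1 : norm2 (delta_mx ord0 i0 : 'rV[R]_p) ^+ 2 = 1.
    rewrite norm2_sq /sq (bigD1 i0) //= big1 ?addr0.
      by rewrite mxE !eqxx expr1n.
    by move=> j /negbTE ji; rewrite mxE ji andbF expr0n.
  rewrite s1 !mulr1 in H1 H2; exact: le_trans H1 H2.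
have L0 : 0 < L by apply: lt_le_trans aL.
have kap : 1 <= L / alpha by rewrite ler_pdivlMr // mul1r.
have ksk : kstar%:R * 16 * (L / alpha) ^+ 2 <= k%:R :> R by move: hk; rewrite [X in X <= _]mulrC mulrA.
have kk : (kstar <= k)%N.
  rewrite -(ler_nat R); apply: le_trans ksk.
  have : 1 <= 16 * (L / alpha) ^+ 2.
    have : 1 <= (L / alpha) ^+ 2 by rewrite exprn_ege1.
    lra.
  move=> H; rewrite -mulrA ler_peMr //.
have kp : (0 < k)%N by apply: leq_trans kk.
set s := alpha / (4 * L).
have s0 : 0 < s by rewrite divr_gt0 // mulr_gt0.
have s14 : s <= 1 / 4.
  by rewrite /s ler_pdivrMr ?mulr_gt0 //; lra.
have ks : kstar%:R <= s ^+ 2 * k%:R.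
  have E : s ^+ 2 * (kstar%:R * 16 * (L / alpha) ^+ 2) = kstar%:R.
    rewrite /s; field; by rewrite !gt_eqF.
  rewrite -[X in X <= _]E; apply: ler_wpM2l => //; apply: sqr_ge0.
have [Is [wIs Isk]] := gnorm0_ex wstar gc.
have Isk' : (#|Is| <= kstar)%N by apply: leq_trans wsk.
have covt : forall t, exists J, inU (cover G J) (w t) /\ (#|J| <= k)%N.
  case => [|t].
    exists finset.set0; rewrite w0 cards0; split => //; exact: inU0.
  have [J [HJ1 HJ2]] := gnorm0_ex (w t.+1) gc.
  exists J; split => //; apply: leq_trans HJ2 _; exact: (iht t).1.
pose e t := norm2 (w t - wstar).
have step : forall t, e t.+1 <= (1 - s) * e t + (5 / 2) * m / L.
  move=> t.
  have [J1 [HJ1 J1k]] := covt t.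
  have [J2 [HJ2 J2k]] := covt t.+1.
  set U := cover G ((J1 :|: J2) :|: Is).
  have UE : U = (cover G J1 :|: cover G J2) :|: cover G Is by rewrite /U !coverU.
  have s1U : cover G J1 \subset U by rewrite UE; apply: (fintype.subset_trans (finset.subsetUl _ _)); exact: finset.subsetUl.
  have s2U : cover G J2 \subset U by rewrite UE; apply: (fintype.subset_trans (finset.subsetUr _ _)); exact: finset.subsetUl.
  have sIU : cover G Is \subset U by rewrite UE; apply: finset.subsetUr.
  have hbU : forall v, inU U v -> forall u, alpha * sq u <= hess_quad f v u <= L * sq u.
    move=> v Uv u.
    have gv : (gnorm0 G v <= k.*2 + kstar)%N.
      apply: leq_trans (gnorm0_le Uv) _.
      apply: leq_trans (leq_card_setU _ _).1 _.
      rewrite -addnn; apply: leq_add => //.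
      apply: leq_trans (leq_card_setU J1 J2).1 _; exact: leq_add.
    have [H1 H2] := rsc v gv u; rewrite norm2_sq in H1 H2; by rewrite H1 H2.
  have Uwt : inU U (w t) by apply: inU_sub s1U HJ1.
  have Uws : inU U wstar by apply: inU_sub sIU wIs.
  set g := w t - L^-1 *: grad f (w t).
  have P := proj_lemma (iht t) HJ2 J2k wIs Isk' kk kp s2U sIU s0 ks.
  have decomp : Defs.restrict g U - wstar =
     (w t - wstar - L^-1 *: Defs.restrict (grad f (w t) - grad f wstar) U)
        - L^-1 *: Defs.restrict (grad f wstar) U.
    apply/rowP => i; rewrite !mxE.
    case iU: (i \in U); first by ring.
    by rewrite Uwt ?iU // Uws ?iU // !mulr0 !subrr.
  have C := @contract R p f U alpha L td hbU (w t) wstar a0 L0 Uwt Uws.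
  have et0 : 0 <= e t by apply: norm2_ge0.
  have s2 : 0 <= 1 - 2 * s by lra.
  have nA : norm2 (w t - wstar - L^-1 *: Defs.restrict (grad f (w t) - grad f wstar) U)
      <= (1 - 2 * s) * e t.
    apply: norm2_sq_le; first by apply: mulr_ge0.
    apply: (le_trans C); rewrite exprMn /e norm2_sq.
    apply: ler_wpM2r; first by apply: sq_ge0.
    have -> : alpha / L = 4 * s by rewrite /s; field; rewrite gt_eqF.
    have : 0 <= s * s by apply: mulr_ge0; apply: ltW.
    rewrite expr2; lra.
  have sqm : forall S, (Gsupp_card G S <= k)%N -> sq (Defs.restrict (grad f wstar) S) <= m ^+ 2.
    move=> S HS; rewrite -norm2_sq ler_pXn2r ?nnegrE ?norm2_ge0 //; exact: max_restr_le.
  have gS : forall J : {set 'I_M}, (#|J| <= k)%N -> (Gsupp_card G (cover G J) <= k)%N.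
    by move=> J HJ; apply: leq_trans (Gsupp_le (fintype.subxx _)) HJ.
  have nB : norm2 (Defs.restrict (grad f wstar) U) <= 2 * m.
    apply: norm2_sq_le; first by apply: mulr_ge0.
    rewrite UE; apply: (le_trans (sq_rstU _ _ _)).
    have := sq_rstU (grad f wstar) (cover G J1) (cover G J2).
    have := sqm _ (gS _ J1k). have := sqm _ (gS _ J2k).
    have := sqm _ (gS _ (leq_trans Isk' kk)).
    have : 0 <= m ^+ 2 by apply: sqr_ge0.
    rewrite expr2 exprMn expr2; lra.
  have nB' : norm2 (L^-1 *: Defs.restrict (grad f wstar) U) <= L^-1 * (2 * m).
    have Li : 0 <= L^-1 by rewrite invr_ge0 ltW.
    rewrite norm2Z //; exact: (ler_wpM2l Li nB).
  have nsum : norm2 (Defs.restrict g U - wstar) <= (1 - 2 * s) * e t + L^-1 * (2 * m).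
    rewrite decomp; apply: (le_trans (norm2D _ _)); rewrite norm2N; lra.
  have nP : e t.+1 <= (1 + s) * norm2 (Defs.restrict g U - wstar).
    apply: norm2_sq_le; first by apply: mulr_ge0; [lra|apply: norm2_ge0].
    by rewrite exprMn norm2_sq.
  have q0 : 0 <= m / L by apply: divr_ge0 => //; apply: ltW.
  have E1 : L^-1 * (2 * m) = 2 * (m / L) by rewrite mulrC -mulrA.
  rewrite E1 in nsum.
  have E2 : 5 / 2 * m / L = 5 / 2 * (m / L) by rewrite mulrA.
  rewrite E2.
  have h1 : 0 <= s * (s * e t) by apply: mulr_ge0; [apply: ltW|apply: mulr_ge0 => //; apply: ltW].
  have h2 : s * (m / L) <= 1 / 4 * (m / L) by apply: ler_wpM2r.
  have h3 := ler_wpM2l (_ : 0 <= 1 + s) nsum.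
  apply: (le_trans nP); apply: le_trans (h3 _) _; first by lra.
  have -> : (1 + s) * ((1 - 2 * s) * e t + 2 * (m / L)) =
      e t - s * e t - 2 * (s * (s * e t)) + 2 * (m / L) + 2 * (s * (m / L)) by ring.
  have -> : (1 - s) * e t + 5 / 2 * (m / L) = e t - s * e t + 5 / 2 * (m / L) by ring.
  lra.
set B := 10 * m / alpha.
have B0 : 0 <= B by apply: divr_ge0; [apply: mulr_ge0|apply: ltW].
have sB : s * B = 5 / 2 * m / L.
  by rewrite /B /s; field; rewrite !gt_eqF.
have ind : forall t, e t <= (1 - s) ^+ t * e 0%N + B.
  elim => [|t IH]; first by rewrite expr0 mul1r lerDl.
  apply: (le_trans (step t)).
  have s1 : 0 <= 1 - s by lra.
  have := ler_wpM2l s1 IH.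
  rewrite exprS -sB; lra.
have eT := ind T.
have ew : e 0%N = norm2 wstar by rewrite /e w0 sub0r norm2N.
rewrite ew in eT.
have nw : norm2 wstar <= eps * (1 + T%:R * s).
  have : norm2 wstar <= eps * (T%:R * s).
    move: hT; rewrite /s => hT.
    have E : 4 * (L / alpha) * (norm2 wstar / eps) = norm2 wstar / (eps * (alpha / (4 * L))).
      by field; rewrite !gt_eqF.
    rewrite E ler_pdivrMr in hT; last by apply: mulr_gt0 => //; apply: divr_gt0 => //; apply: mulr_gt0.
    apply: (le_trans hT); rewrite le_eqVlt; apply/orP; left; apply/eqP; ring.
  have : 0 <= eps by apply: ltW.
  nra.
have h0 : 0 <= (1 - s) ^+ T by apply: exprn_ge0; lra.
have pbnd : (1 - s) ^+ T * (1 + T%:R * s) <= 1.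
  by apply: pow_bound; apply/andP; split; [apply: ltW|lra].
have : (1 - s) ^+ T * norm2 wstar <= eps.
  apply: (le_trans (ler_wpM2l h0 nw)).
  have := ler_wpM2l (ltW e0) pbnd; rewrite mulr1; lra.
have -> : 10 * L / alpha * (2 / L * m) = 2 * B by rewrite /B; field; rewrite !gt_eqF.
rewrite -/(e T).
lra.
Qed.
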